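(* Let $\chi:\mathfrak{g}\to W_1^*\otimes\cdots\otimes W_n^*$ and $\varphi:\mathfrak{h}\to V_1^*\otimes\cdots\otimes V_m^*$ be factorization structures, and $T\subset\chi(\mathfrak{g})$, $S\subset\varphi(\mathfrak{h})$ 1-dimensional subspaces; consider the product $P=\varphi(\mathfrak{h})\otimes T+S\otimes\chi(\mathfrak{g})\subset V_1^*\otimes\cdots\otimes V_m^*\otimes W_1^*\otimes\cdots\otimes W_n^*$. Then for 1-dimensional subspaces $I\subset V_1^*\otimes\cdots\otimes V_m^*$ and $K\subset W_1^*\otimes\cdots\otimes W_n^*$ we have $I\otimes K\subset P$ if and only if either ($I=S$ and $K\subset\chi(\mathfrak{g})$) or ($K=T$ and $I\subset\varphi(\mathfrak{h})$).
   Context: All spaces are real or complex; $V_i,W_i$ are 2-dimensional. A factorization structure of dimension $m$ is an injective linear map $\varphi:\mathfrak{h}\to V_1^*\otimes\cdots\otimes V_m^*$ with $\dim\mathfrak{h}=m+1$ such that $\dim(\varphi(\mathfrak{h})\cap V_1^*\otimes\cdots\otimes\ell^0\otimes\cdots\otimes V_m^* )=1$ (with $\ell^0$, the annihilator of $\ell$, in the $j$-th slot) for every $j$ and all $\ell$ in a nonempty Zariski-open subset of $\mathbb{P}(V_j)$. The subspace $P$ is (the image of) the product factorization structure of $\varphi$ and $\chi$. *)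

(* Defs.v *)
From HB Require Import structures.
From mathcomp Require Import all_boot all_order all_algebra.
From mathcomp Require Import mpoly.
Set Implicit Arguments. Unset Strict Implicit. Unset Printing Implicit Defensive.
Import Order.TTheory GRing.Theory Num.Theory.
Local Open Scope ring_scope.

(* Every V_i is the 2-dimensional coordinate space F^2 (vectors 'I_2 -> F);
   V_i^* is identified with F^2 through the dual basis, the pairing being
   alpha(v) = alpha_0 v_0 + alpha_1 v_1. *)

Section Tensors.
Variable F : fieldType.

Definition Dual2 := {ffun 'I_2 -> F^o}.

Definition Tens (m : nat) := {ffun {ffun 'I_m -> 'I_2} -> F^o}.

Definition dbasis (k : 'I_2) : Dual2 := [ffun k' => (k == k')%:R].

Definition etens (m : nat) (a : 'I_m -> Dual2) : Tens m :=
  [ffun s : {ffun 'I_m -> 'I_2} => \prod_(i < m) a i (s i)].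

Definition pairing (v : 'I_2 -> F) (alpha : Dual2) : F^o :=
  \sum_(k < 2) alpha k * v k.
Definition annih (v : 'I_2 -> F) : {vspace Dual2} :=
  lker (linfun (pairing v)).

(* V_1^* (x) ... (x) l^0 (x) ... (x) V_m^*, with l^0 in the j-th slot:
   spanned by elementary tensors with a basis vector of l^0 in slot j and
   standard basis vectors in the other slots. *)
Definition slot_sub (m : nat) (j : 'I_m) (v : 'I_2 -> F) : {vspace Tens m} :=
  <<[seq etens (fun i => if i == j then a else dbasis (s i))
     | s : {ffun 'I_m -> 'I_2} <- enum {ffun 'I_m -> 'I_2}, a <- vbasis (annih v)]>>%VS.

(* Zariski topology on P(V_j) = P^1 : closed sets are common zero loci of
   families of homogeneous polynomials in the two coordinates. *)
Definition zclosed_pt (S : {mpoly F[2]} -> Prop) (v : 'I_2 -> F) : Prop :=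
  forall p, S p -> p.@[v] = 0.

(* "the property Q holds for all l in a nonempty Zariski-open subset of P(V)"
   (a line l is represented by a nonzero spanning vector v) *)
Definition on_nonempty_zopen (Q : ('I_2 -> F) -> Prop) : Prop :=
  exists S : {mpoly F[2]} -> Prop,
    (forall p, S p -> p \is homog mdeg) /\
    (exists v : 'I_2 -> F, (exists k, v k != 0) /\ ~ zclosed_pt S v) /\
    (forall v : 'I_2 -> F, (exists k, v k != 0) -> ~ zclosed_pt S v -> Q v).

Definition fact_struct (m : nat) (hT : vectType F) (phi : 'Hom(hT, Tens m)) :
  Prop :=
  [/\ \dim (fullv : {vspace hT}) = m.+1,
      lker phi = 0%VS &
      forall j : 'I_m, on_nonempty_zopen
        (fun v => \dim (limg phi :&: slot_sub j v) = 1%N)].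

Definition tens (m n : nat) (a : Tens m) (b : Tens n) : Tens (m + n) :=
  [ffun s : {ffun 'I_(m + n) -> 'I_2} => a [ffun i => s (lshift n i)] * b [ffun i => s (rshift m i)]].

Definition tens_sp (m n : nat) (U : {vspace Tens m}) (W : {vspace Tens n}) :
  {vspace Tens (m + n)} :=
  <<[seq tens a b | a <- vbasis U, b <- vbasis W]>>%VS.

End Tensors.

(* Main.v *)
Require Import Defs.
From HB Require Import structures.
From mathcomp Require Import all_boot all_order all_algebra.
From mathcomp Require Import mpoly.
Import Order.TTheory GRing.Theory Num.Theory.
Local Open Scope ring_scope.

Set Implicit Arguments. Unset Strict Implicit.
Section Aux.
Variable F : fieldType.

Definition tjoin m n (s : {ffun 'I_m -> 'I_2}) (r : {ffun 'I_n -> 'I_2})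
  : {ffun 'I_(m + n) -> 'I_2} :=
  [ffun i => match split i with inl j => s j | inr k => r k end].

Lemma join_l m n s r : [ffun i => @tjoin m n s r (lshift n i)] = s.
Proof. by apply/ffunP=> i; rewrite !ffunE (unsplitK (inl _ i)). Qed.

Lemma join_r m n s r : [ffun i => @tjoin m n s r (rshift m i)] = r.
Proof. by apply/ffunP=> i; rewrite !ffunE (unsplitK (inr _ i)). Qed.

Definition Lc m n (f : 'Hom(Tens F m, F^o)) (z : Tens F (m + n)) : Tens F n :=
  [ffun r : {ffun 'I_n -> 'I_2} => f [ffun s : {ffun 'I_m -> 'I_2} => z (tjoin s r)]].
Definition Rc m n (g : 'Hom(Tens F n, F^o)) (z : Tens F (m + n)) : Tens F m :=
  [ffun s : {ffun 'I_m -> 'I_2} => g [ffun r : {ffun 'I_n -> 'I_2} => z (tjoin s r)]].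

Lemma Lc_tens m n (f : 'Hom(Tens F m, F^o)) (x : Tens F m) (y : Tens F n) :
  Lc f (tens x y) = f x *: y.
Proof.
apply/ffunP=> r; rewrite !ffunE.
have -> : [ffun s => tens x y (tjoin s r)] = y r *: x.
  by apply/ffunP=> s; rewrite !ffunE join_l join_r -[RHS]/(y r * x s) mulrC.
by rewrite linearZ /= -[LHS]/(y r * f x) -[RHS]/(f x * y r) mulrC.
Qed.

Lemma Rc_tens m n (g : 'Hom(Tens F n, F^o)) (x : Tens F m) (y : Tens F n) :
  Rc g (tens x y) = g y *: x.
Proof.
apply/ffunP=> s; rewrite !ffunE.
have -> : [ffun r => tens x y (tjoin s r)] = x s *: y.
  by apply/ffunP=> r; rewrite !ffunE join_l join_r.
by rewrite linearZ /= -[LHS]/(x s * g y) -[RHS]/(g y * x s) mulrC.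
Qed.

Lemma Lc_lin m n (f : 'Hom(Tens F m, F^o)) c (z1 z2 : Tens F (m + n)) :
  Lc f (c *: z1 + z2) = c *: Lc f z1 + Lc f z2.
Proof.
apply/ffunP=> r; rewrite !ffunE.
have -> : [ffun s => (c *: z1 + z2) (tjoin s r)] =
   c *: [ffun s => z1 (tjoin s r)] + [ffun s => z2 (tjoin s r)].
  by apply/ffunP=> s; rewrite !ffunE.
by rewrite linearP.
Qed.

Lemma Rc_lin m n (g : 'Hom(Tens F n, F^o)) c (z1 z2 : Tens F (m + n)) :
  Rc g (c *: z1 + z2) = c *: Rc g z1 + Rc g z2.
Proof.
apply/ffunP=> r; rewrite !ffunE.
have -> : [ffun s => (c *: z1 + z2) (tjoin r s)] =
   c *: [ffun s => z1 (tjoin r s)] + [ffun s => z2 (tjoin r s)].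
  by apply/ffunP=> s; rewrite !ffunE.
by rewrite linearP.
Qed.

Lemma span_map (vT wT : vectType F) (h : vT -> wT)
  (hL : forall c x y, h (c *: x + y) = c *: h x + h y)
  (X : seq vT) (V : {vspace wT}) z :
  z \in <<X>>%VS -> (forall x, x \in X -> h x \in V) -> h z \in V.
Proof.
have h0 : h 0 = 0.
  by have := hL (-1) 0 0; rewrite !scaleN1r !addNr.
have hD x y : h (x + y) = h x + h y by have := hL 1 x y; rewrite !scale1r.
have hZ c x : h (c *: x) = c *: h x by rewrite -(addr0 (c *: x)) hL h0 addr0.
move=> zX hX; rewrite (coord_span (X := in_tuple X) zX).
rewrite (big_morph h hD h0); apply: memv_suml => i _.
by rewrite hZ memvZ // hX // mem_nth.
Qed.

Lemma tensDl m n (x1 x2 : Tens F m) (y : Tens F n) c :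
  tens (c *: x1 + x2) y = c *: tens x1 y + tens x2 y.
Proof. by apply/ffunP=> s; rewrite !ffunE mulrDl scalerAl. Qed.

Lemma tensDr m n (x : Tens F m) (y1 y2 : Tens F n) c :
  tens x (c *: y1 + y2) = c *: tens x y1 + tens x y2.
Proof. by apply/ffunP=> s; rewrite !ffunE mulrDr scalerAr. Qed.

Lemma lin_sum (vT wT : vectType F) (h : vT -> wT)
  (hL : forall c x y, h (c *: x + y) = c *: h x + h y) :
  (h 0 = 0) * (forall x y, h (x + y) = h x + h y) * (forall c x, h (c *: x) = c *: h x).
Proof.
have h0 : h 0 = 0.
  by have := hL (-1) 0 0; rewrite !scaleN1r !addNr.
split; [split=> // x y|]; first by have := hL 1 x y; rewrite !scale1r.
by move=> c x; rewrite -(addr0 (c *: x)) hL h0 addr0.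
Qed.

Lemma tens_mem m n (U : {vspace Tens F m}) (W : {vspace Tens F n}) u w :
  u \in U -> w \in W -> tens u w \in tens_sp U W.
Proof.
move=> uU wW.
have [[h0 hD] hZ] := lin_sum (vT := Tens F m) (wT := Tens F (m + n)) (h := fun x => tens x w) (fun c x y => tensDl x y w c).
rewrite (coord_vbasis uU) (big_morph _ hD h0); apply: memv_suml => i _.
rewrite hZ memvZ //.
have [[k0 kD] kZ] := lin_sum (vT := Tens F n) (wT := Tens F (m + n)) (h := fun y => tens (vbasis U)`_i y)
   (fun c x y => tensDr _ x y c).
rewrite (coord_vbasis wW) (big_morph _ kD k0); apply: memv_suml => j _.
rewrite kZ memvZ // memv_span //; apply: allpairs_f; apply: mem_nth;
  by rewrite size_tuple.
Qed.

Lemma tens_gen m n (U : {vspace Tens F m}) (W : {vspace Tens F n}) x :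
  x \in [seq tens a b | a <- vbasis U, b <- vbasis W] ->
  exists a b, [/\ a \in U, b \in W & x = tens a b].
Proof.
move/allpairsP=> [[a b] /= [Ha Hb ->]].
by exists a, b; split=> //; apply: vbasis_mem.
Qed.

Lemma form_exists (vT : vectType F) (U : {vspace vT}) a :
  a \notin U -> exists f : 'Hom(vT, F^o), (forall u, u \in U -> f u = 0) /\ f a = 1.
Proof.
move=> aU.
pose X := [tuple of a :: vbasis U].
have fX : free X.
  rewrite /= free_cons (basis_free (vbasisP U)) andbT.
  by move: (vbasisP U) => /andP[/eqP -> _].
exists (linfun (coord X ord0 : vT -> F^o)); split; last first.
  by rewrite lfunE /= (coord_free ord0 ord0 fX).
move=> u uU; rewrite lfunE /= (coord_vbasis uU).
rewrite linear_sum big1 // => i _; rewrite linearZ /=.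
have -> : (vbasis U)`_i = X`_(lift ord0 i) by [].
by rewrite coord_free // mulr0.
Qed.

Lemma dim1_line (vT : vectType F) (I : {vspace vT}) :
  \dim I = 1%N -> exists a, a != 0 /\ I = <[a]>%VS.
Proof.
move=> HI; have nz : vpick I != 0.
  by rewrite vpick0; apply/eqP=> I0; rewrite I0 dimv0 in HI.
exists (vpick I); split=> //; apply/esym/eqP.
by rewrite eqEdim -memvE memv_pick dim_vline nz HI.
Qed.

Lemma eq_dim1 (vT : vectType F) (U V : {vspace vT}) :
  (U <= V)%VS -> \dim U = 1%N -> \dim V = 1%N -> U = V.
Proof. by move=> UV dU dV; apply/eqP; rewrite eqEdim UV dU dV leqnn. Qed.

End Aux.
Unset Implicit Arguments.

Theorem lemma1p11 (F : numFieldType) (m n : nat)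
  (hT gT : vectType F)
  (phi : 'Hom(hT, Tens F m)) (chi : 'Hom(gT, Tens F n))
  (Hphi : fact_struct phi) (Hchi : fact_struct chi)
  (S : {vspace Tens F m}) (T : {vspace Tens F n})
  (HS : \dim S = 1%N) (HSphi : (S <= limg phi)%VS)
  (HT : \dim T = 1%N) (HTchi : (T <= limg chi)%VS)
  (I : {vspace Tens F m}) (K : {vspace Tens F n})
  (HI : \dim I = 1%N) (HK : \dim K = 1%N) :
  let P := (tens_sp (limg phi) T + tens_sp S (limg chi))%VS in
  (tens_sp I K <= P)%VS <->
  ((I = S /\ (K <= limg chi)%VS) \/ (K = T /\ (I <= limg phi)%VS)).
Proof.
move=> P; set A := limg phi; set B := limg chi.
split; last first.
  move=> H; apply/span_subvP => x /tens_gen [a [b [aI bK ->]]].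
  case: H => [[IS KB] | [KT IA]].
    by apply: (subvP (addvSr _ _)); apply: tens_mem; [rewrite -IS | apply: (subvP KB)].
  by apply: (subvP (addvSl _ _)); apply: tens_mem;
    [apply: (subvP IA) | rewrite -KT].
move=> HP.
have [a [a0 Ia]] := dim1_line HI.
have [b [b0 Kb]] := dim1_line HK.
have : tens a b \in P by apply: (subvP HP); apply: tens_mem; rewrite ?Ia ?Kb memv_line.
case/memv_addP => x xAT [y ySB exy].
have LcL (f : 'Hom(Tens F m, F^o)) := Lc_lin (m:=m) (n:=n) f.
have RcL (g : 'Hom(Tens F n, F^o)) := Rc_lin (m:=m) (n:=n) g.
have [aS | aS] := boolP (a \in S).
  left; split; first by apply: eq_dim1 => //; rewrite Ia -memvE.
  have a0' : a \notin (0%VS : {vspace Tens F m}) by rewrite memv0.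
  have [f [_ fa]] := form_exists a0'.
  have : Lc f (tens a b) \in B.
    rewrite exy -(scale1r x) Lc_lin scale1r; apply: memvD.
      apply: (subvP HTchi); apply: (span_map (LcL f) xAT) => z /tens_gen [u [v [_ vT ->]]].
      by rewrite Lc_tens memvZ.
    apply: (span_map (LcL f) ySB) => z /tens_gen [u [v [_ vB ->]]].
    by rewrite Lc_tens memvZ.
  by rewrite Lc_tens fa scale1r Kb memvE.
have [f [fS fa]] := form_exists aS.
have bT : b \in T.
  have : Lc f (tens a b) \in T.
    rewrite exy -(scale1r x) Lc_lin scale1r.
    have -> : Lc f y = 0.
      apply/eqP; rewrite -memv0.
      apply: (span_map (LcL f) ySB) => z /tens_gen [u [v [uS _ ->]]].
      by rewrite Lc_tens fS // scale0r mem0v.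
    rewrite addr0; apply: (span_map (LcL f) xAT) => z /tens_gen [u [v [_ vT ->]]].
    by rewrite Lc_tens memvZ.
  by rewrite Lc_tens fa scale1r.
have KT : K = T by apply: eq_dim1 => //; rewrite Kb -memvE.
right; split=> //.
have b0' : b \notin (0%VS : {vspace Tens F n}) by rewrite memv0.
have [g [_ gb]] := form_exists b0'.
have : Rc g (tens a b) \in A.
  rewrite exy -(scale1r x) Rc_lin scale1r; apply: memvD.
    apply: (span_map (RcL g) xAT) => z /tens_gen [u [v [uA _ ->]]].
    by rewrite Rc_tens memvZ.
  apply: (subvP HSphi); apply: (span_map (RcL g) ySB) => z /tens_gen [u [v [uS _ ->]]].
  by rewrite Rc_tens memvZ.
by rewrite Rc_tens gb scale1r Ia memvE.
Qed.
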